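(* Let $1\leq k\leq n$ and let $\Lambda_1,\dots,\Lambda_d\subset\mathbb{P}^n$ be $(k-1)$-dimensional linear subspaces satisfying $\mathrm{SP}(n-k)$. Let $2\leq r\leq d-1$ be an integer such that $\Lambda_{r+1},\dots,\Lambda_d$ do not satisfy $\mathrm{SP}(n-k)$. Then $$\dim\big(\mathrm{Span}(\Lambda_1,\dots,\Lambda_r)\cap\mathrm{Span}(\Lambda_{r+1},\dots,\Lambda_d)\big)\geq k-1.$$
   Context: $(k-1)$-dimensional linear subspaces $\Lambda_1,\dots,\Lambda_e\subset\mathbb{P}^n$ (not necessarily distinct) satisfy $\mathrm{SP}(n-k)$ if for every $j\in\{1,\dots,e\}$ and every $(n-k)$-dimensional linear subspace $L\subset\mathbb{P}^n$ meeting each $\Lambda_i$ with $i\neq j$, $L$ also meets $\Lambda_j$. (In particular a single subspace, $e=1$, does not satisfy this condition, since the empty intersection condition is met by an $(n-k)$-plane disjoint from it.) *)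

(* Defs.v *)
From HB Require Import structures.
From mathcomp Require Import all_boot all_order all_algebra.
Set Implicit Arguments. Unset Strict Implicit. Unset Printing Implicit Defensive.
Import GRing.Theory.
Local Open Scope ring_scope.

(* Projective space P^n over K is modelled by K^(n+1) (row vectors of width
   n.+1).  A projective linear subspace of dimension m is the row space of a
   square matrix of rank m+1.  Projective subspaces meet iff the
   corresponding vector subspaces have nonzero intersection. *)

Definition meets (K : fieldType) (n : nat) (A B : 'M[K]_(n.+1)) : bool :=
  (0 < \rank (A :&: B)%MS)%N.

Definition SP (K : fieldType) (n m e : nat) (Lam : 'I_e -> 'M[K]_(n.+1)) : Prop :=
  forall (j : 'I_e) (L : 'M[K]_(n.+1)),
    \rank L = m.+1 ->
    (forall i : 'I_e, i != j -> meets L (Lam i)) ->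
    meets L (Lam j).

(* Main.v *)
Require Import Defs.
From HB Require Import structures.
From mathcomp Require Import all_boot all_order all_algebra.
From mathcomp Require Import zify.
From Stdlib Require Import Classical.
Set Implicit Arguments. Unset Strict Implicit. Unset Printing Implicit Defensive.
Import GRing.Theory.
Local Open Scope ring_scope.

Section Help.
Variables (FF : fieldType) (N : nat).


Lemma cap_row0 m (X : 'M[FF]_(m, N)) (v : 'rV_N) :
  ~~ (v <= X)%MS -> (X :&: v)%MS = 0.
Proof.
move=> nvX; apply/eqP; rewrite -mxrank_eq0; apply/eqP.
have h1 : (\rank (X :&: v)%MS <= \rank v)%N by apply: mxrankS; exact: capmxSr.
have h2 : (\rank v <= 1)%N by rewrite rank_rV; case: (v != 0).
case E: (\rank (X :&: v)%MS) => [//|c].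
have eqv : (\rank (X :&: v)%MS == \rank v).
  by rewrite eqn_leq h1 /= E; apply: leq_trans h2 _.
have : (X :&: v == v)%MS by rewrite -(mxrank_leqif_eq (capmxSr X v)).
case/andP=> _ h; move: nvX => /negP; case.
exact: submx_trans h (capmxSl _ _).
Qed.

Lemma rank_add_row m (X : 'M[FF]_(m, N)) (v : 'rV_N) :
  ~~ (v <= X)%MS -> \rank (X + v)%MS = (\rank X).+1.
Proof.
move=> nvX; have := mxrank_sum_cap X v; rewrite cap_row0 // mxrank0 addn0.
have -> : \rank v = 1%N.
  rewrite rank_rV; case: eqP => // v0; move: nvX; by rewrite v0 sub0mx.
by rewrite addn1.
Qed.


Lemma subB_sub m1 m2 (A B : 'M[FF]_(m1, N)) (C : 'M[FF]_(m2, N)) :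
  (A <= C)%MS -> (B <= C)%MS -> (A - B <= C)%MS.
Proof. by move=> hA hB; apply: addmx_sub => //; rewrite eqmx_opp. Qed.

Lemma hyperplane (X Y : 'M[FF]_N) (l : 'rV[FF]_N) :
  (Y <= X)%MS -> (l <= X)%MS -> ~~ (l <= Y)%MS ->
  exists X' : 'M[FF]_N, [/\ (Y <= X')%MS, (X' <= X)%MS, ~~ (l <= X')%MS &
     (\rank X').+1 = \rank X].
Proof.
move=> YX lX nlY.
pose Z := (Y + l)%MS; pose C := (X :\: Z)%MS.
have CZ0 : (C :&: Z)%MS = 0 by exact: capmx_diff.
have ZX : (Z <= X)%MS by rewrite addsmx_sub YX lX.
exists (Y + C)%MS; split.
- exact: addsmxSl.
- by rewrite addsmx_sub YX diffmxSl.
- apply/negP => /sub_addsmxP [[u1 u2] /= e].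
  have cZ : (u2 *m C <= Z)%MS.
    have -> : u2 *m C = l - u1 *m Y by rewrite e addrC addKr.
    apply: subB_sub; first exact: addsmxSr.
    exact: submx_trans (submxMl _ _) (addsmxSl _ _).
  have c0 : u2 *m C = 0.
    apply/eqP; rewrite -submx0 -CZ0 sub_capmx cZ andbT; exact: submxMl.
  by move: nlY; rewrite e c0 addr0 submxMl.
- have h1 := mxrank_cap_compl X Z.
  have h2 : \rank (X :&: Z)%MS = \rank Z by apply/eqP; rewrite eqn_leq !mxrankS ?capmxSr // sub_capmx ZX submx_refl.
  have h3 : \rank Z = (\rank Y).+1 by exact: rank_add_row.
  have h4 := mxrank_sum_cap Y C.
  have h5 : \rank (Y :&: C)%MS = 0%N.
    apply/eqP; rewrite mxrank_eq0 -submx0 -CZ0 capmxC.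
    by apply: capmxS => //; exact: addsmxSl.
  rewrite h5 addn0 in h4; rewrite h4 -h1 h2 h3 addSn //.
Qed.

End Help.

Lemma meets_mono (FF : fieldType) (n : nat) (S T Lm : 'M[FF]_(n.+1)) :
  (S <= T)%MS -> meets S Lm -> meets T Lm.
Proof.
move=> ST; rewrite /meets => h; apply: leq_trans h _.
by apply: mxrankS; apply: capmxS.
Qed.

Lemma meets_big (FF : fieldType) (n : nat) (U Lm A : 'M[FF]_(n.+1)) :
  (U <= A)%MS -> (Lm <= A)%MS -> (\rank A < \rank U + \rank Lm)%N -> meets U Lm.
Proof.
move=> UA LA h; rewrite /meets.
have h1 := mxrank_sum_cap U Lm.
have h2 : (\rank (U + Lm)%MS <= \rank A)%N by apply: mxrankS; rewrite addsmx_sub UA LA.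
lia.
Qed.

Lemma arith1 (a b c e : nat) : (a + b = c + e)%N -> (b <= 0)%N -> (a <= c.+1)%N -> (e <= 1)%N.
Proof. lia. Qed.

Lemma arith2 (a b : nat) : (a <= b)%N -> (0 < a)%N -> (b <= 1)%N -> a = b.
Proof. lia. Qed.

Lemma arith3 (a b c : nat) : (a <= b + c)%N -> (a < b.+1 + c)%N.
Proof. lia. Qed.

Theorem lemma2p11 (K : closedFieldType) (n k d r : nat)
    (Lam : nat -> 'M[K]_(n.+1)) :
  (1 <= k <= n)%N ->
  (forall i, (i < d)%N -> \rank (Lam i) = k) ->
  SP (n - k) (fun i : 'I_d => Lam (nat_of_ord i)) ->
  (2 <= r <= d.-1)%N ->
  ~ SP (n - k) (fun i : 'I_(d - r) => Lam (r + nat_of_ord i)%N) ->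
  (k <= \rank ((\sum_(i < r) Lam i) :&: (\sum_(i < d - r) Lam (r + i)%N))%MS)%N.
Proof.
move=> /andP[k1 kn] rk SPall /andP[r2 rd] nSP.
set A := (\sum_(i < r) Lam i)%MS.
set B := (\sum_(i < d - r) Lam (r + i)%N)%MS.
rewrite leqNgt; apply/negP => hAB.
have [j [L [rL mL nmL]]] : exists (j : 'I_(d-r)) (L : 'M[K]_(n.+1)),
   [/\ \rank L = (n-k).+1,
       forall i : 'I_(d-r), i != j -> meets L (Lam (r+i)%N) &
       ~~ meets L (Lam (r+j)%N)].
  apply: NNPP => hne; apply: nSP => j L rL mL.
  apply/negPn/negP => nm; apply: hne; exists j, L; split => //.
have LamA : forall i, (i < r)%N -> (Lam i <= A)%MS.
  move=> i ir; exact: (sumsmx_sup (Ordinal ir)).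
have LamB : forall i : 'I_(d-r), (Lam (r + i)%N <= B)%MS.
  move=> i; exact: (sumsmx_sup i).
have rjd : (r + j < d)%N by have := ltn_ord j; lia.
set Lj := Lam (r + j)%N.
have rLj : \rank Lj = k by apply: rk.
have LLj0 : \rank (L :&: Lj)%MS = 0%N by move: nmL; rewrite /meets -leqNgt leqn0 => /eqP.
have contra : forall T : 'M[K]_(n.+1), \rank T = (n-k).+1 ->
    (forall i, (i < r)%N -> meets T (Lam i)) ->
    (forall i : 'I_(d-r), i != j -> meets T (Lam (r+i)%N)) -> meets T Lj.
  move=> T rT hA hB.
  have := SPall (Ordinal rjd) T rT; apply => i ij.
  case: (ltnP i r) => ir; first exact: hA.
  have id : (i - r < d - r)%N by have := ltn_ord i; lia.
  have := hB (Ordinal id); rewrite /= subnKC //; apply.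
  apply/negP => /eqP e; move: ij => /negP; apply; apply/eqP; apply: val_inj => /=.
  by rewrite -e /= subnKC.
have rA : (k <= \rank A)%N.
  rewrite -(rk 0%N); last lia.
  by apply: mxrankS; apply: LamA; lia.
have hAL : (\rank A <= \rank (A :&: L)%MS + k)%N.
  have h1 := mxrank_sum_cap A L.
  have h2 := rank_leq_col (A + L)%MS.
  lia.
case: (ltnP (\rank A) (\rank (A :&: L)%MS + k)) => case1.
  move: nmL => /negP; apply; apply: contra => // i ir.
  apply: (meets_mono (capmxSr A L)); apply: (meets_big (capmxSl A L) (LamA i ir)).
  by rewrite rk //; lia.
set X := ((A :&: L) + (A :&: B))%MS.
have rX : (\rank X < \rank A)%N.
  have [h _] := mxrank_adds_leqif (A :&: L)%MS (A :&: B)%MS.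
  rewrite /X; lia.
have nAX : ~~ (A <= X)%MS by apply/negP => /mxrankS; lia.
case/row_subPn: nAX => i0 nvX.
set v := row i0 A.
have vA : (v <= A)%MS by exact: row_sub.
have ALX : (A :&: L <= X)%MS by exact: addsmxSl.
have vL : ~~ (v <= L)%MS.
  apply/negP => vL; move/negP: nvX; apply; apply: submx_trans ALX.
  by rewrite sub_capmx vA vL.
set Y := ((A :&: L) + (L :&: B))%MS.
have YL : (Y <= L)%MS by rewrite addsmx_sub capmxSr capmxSl.
have rLv : \rank (L + v)%MS = (\rank L).+1 by exact: rank_add_row.
set Q := ((L + v) :&: Lj)%MS.
have rQ1 : (0 < \rank Q)%N.
  have h1 := mxrank_sum_cap (L + v)%MS Lj.
  have h2 := rank_leq_col ((L + v) + Lj)%MS.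
  rewrite /Q; lia.
have nQ0 : ~~ (Q <= (0 : 'M[K]_(n.+1)))%MS by rewrite submx0 -mxrank_eq0 -lt0n.
case/row_subPn: nQ0 => i1; rewrite submx0 => x0.
set x := row i1 Q.
have xQ : (x <= Q)%MS by exact: row_sub.
have xLv : (x <= L + v)%MS by apply: submx_trans xQ (capmxSl _ _).
have xLj : (x <= Lj)%MS by apply: submx_trans xQ (capmxSr _ _).
have LjB : (Lj <= B)%MS by exact: (LamB j).
have Lv0 : (L :&: v)%MS = 0 by exact: cap_row0.
case/sub_addsmxP: xLv => [[u1 u2] /= ex].
set lx := u1 *m L in ex; set wx := u2 *m v in ex.
have lxL : (lx <= L)%MS by exact: submxMl.
have wxv : (wx <= v)%MS by exact: submxMl.
have nlY : ~~ (lx <= Y)%MS.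
  apply/negP => /sub_addsmxP [[a1 a2] /= el].
  set u0 := a1 *m (A :&: L)%MS in el; set b := a2 *m (L :&: B)%MS in el.
  have u0AL : (u0 <= A :&: L)%MS by exact: submxMl.
  have bLB : (b <= L :&: B)%MS by exact: submxMl.
  have sAB : ((u0 + wx)%R <= A :&: B)%MS.
    rewrite sub_capmx; apply/andP; split.
      apply: addmx_sub; first by apply: submx_trans u0AL (capmxSl _ _).
      exact: submx_trans wxv vA.
    have -> : u0 + wx = x - b by rewrite ex el addrAC addrK.
    apply: subB_sub; first exact: submx_trans xLj LjB.
    exact: submx_trans bLB (capmxSr _ _).
  have wxX : (wx <= X)%MS.
    have -> : wx = (u0 + wx) - u0 by rewrite [u0 + wx]addrC addrK.
    apply: subB_sub; first exact: submx_trans sAB (addsmxSr _ _).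
    exact: submx_trans u0AL ALX.
  case: (eqVneq wx 0) => wx0.
    move: x0 => /negP; apply.
    have : (x <= L :&: Lj)%MS by rewrite sub_capmx xLj ex wx0 addr0 lxL.
    move/mxrankS; rewrite LLj0 leqn0 mxrank_eq0 //.
  move/negP: nvX; apply; apply: submx_trans wxX.
  have := mxrank_leqif_sup wxv; rewrite !rank_rV wx0.
  have -> : (v != 0) by apply/eqP => v0; move: vL; rewrite v0 sub0mx.
  by case=> _ <-.
have [L' [YL' L'L nlL' rL']] := hyperplane YL lxL nlY.
set T := (L' + v)%MS.
have vL' : ~~ (v <= L')%MS by apply/negP => h; move/negP: vL; apply; apply: submx_trans h L'L.
have rT : \rank T = (n-k).+1 by rewrite /T rank_add_row // -rL -rL'.
have TLv : (T <= L + v)%MS by apply: addsmxS.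
have TLj0 : \rank (T :&: Lj)%MS = 0%N.
  apply/eqP; rewrite -leqn0 leqNgt; apply/negP => pos.
  have rQ : (\rank Q <= 1)%N.
    have h1 := mxrank_sum_cap L Q.
    have h2 : (\rank (L :&: Q)%MS <= \rank (L :&: Lj)%MS)%N.
      by apply: mxrankS; apply: capmxS => //; exact: capmxSr.
    have h3 : (\rank (L + Q)%MS <= \rank (L + v)%MS)%N.
      by apply: mxrankS; rewrite addsmx_sub addsmxSl capmxSl.
    rewrite LLj0 in h2; rewrite rLv in h3; exact: arith1 h1 h2 h3.
  have TQ : (T :&: Lj <= Q)%MS by rewrite /Q; exact: capmxS TLv (submx_refl Lj).
  have QT : (Q <= T :&: Lj)%MS.
    have := mxrank_leqif_sup TQ; case=> le <-; apply/eqP; exact: arith2 le pos rQ.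
  have xT : (x <= T)%MS by apply: submx_trans (submx_trans xQ QT) (capmxSl _ _).
  case/sub_addsmxP: xT => [[c1 c2] /= ex2].
  move/negP: nlL'; apply.
  have d0 : lx - c1 *m L' = 0.
    apply/eqP; rewrite -submx0 -Lv0 sub_capmx; apply/andP; split.
      apply: subB_sub => //; apply: submx_trans L'L; exact: submxMl.
    have -> : lx - c1 *m L' = c2 *m v - wx.
      apply/eqP; rewrite subr_eq addrAC eq_sym subr_eq -ex ex2 addrC //.
    by apply: subB_sub => //; exact: submxMl.
  by move/eqP: d0; rewrite subr_eq0 => /eqP ->; exact: submxMl.
have : meets T Lj.
  apply: contra => //.
    move=> i ir.
    have UT : ((A :&: L) + v <= T)%MS.
      apply: addsmxS => //; apply: submx_trans YL'; exact: addsmxSl.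
    apply: (meets_mono UT); apply: (meets_big (A := A)).
    - by rewrite addsmx_sub capmxSl vA.
    - exact: LamA.
    rewrite rank_add_row; last first.
      by apply/negP => h; move/negP: vL; apply; apply: submx_trans h (capmxSr _ _).
    rewrite rk; first exact: arith3 hAL.
    by apply: (leq_trans ir); apply: leq_trans rd (leq_pred d).
  move=> i ij; have := mL i ij; rewrite /meets => h; apply: leq_trans h _.
  apply: mxrankS; rewrite sub_capmx capmxSr andbT.
  apply: submx_trans (submx_trans _ YL') (addsmxSl _ _).
  apply: submx_trans (addsmxSr _ _).
  by apply: capmxS => //; exact: LamB.
by rewrite /meets TLj0.
Qed.
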